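(* Let $n\in\mathbb{N}$ and $\xi_1,\dots,\xi_n\ge0$ with $\xi_1+\dots+\xi_n=1$. For $j\in[n]$ define $\phi_j:\mathbb{R}^n\to\mathbb{R}$ by $\phi_j(z)=\frac{\xi_j\exp(z_j)}{\sum_{k=1}^n\xi_k\exp(z_k)}$, and let $\sum_{\gamma\in\mathbb{Z}_{\ge0}^n}a_{j,\gamma}z^\gamma$ be its Taylor series at $0$. Then for every $j\in[n]$ and every integer $k\ge1$, $$\sum_{\gamma\in\mathbb{Z}_{\ge0}^n:\,|\gamma|=k}|a_{j,\gamma}|\le\xi_je^{k+1}.$$
   Context: $z^\gamma=z_1^{\gamma_1}\cdots z_n^{\gamma_n}$ and $|\gamma|=\gamma_1+\dots+\gamma_n$. *)

(* Defs.v *)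
From HB Require Import structures.
From mathcomp Require Import all_boot all_order all_algebra.
From mathcomp Require Import all_classical all_reals all_analysis.
Set Implicit Arguments. Unset Strict Implicit. Unset Printing Implicit Defensive.
Import Order.TTheory GRing.Theory Num.Theory.
Local Open Scope ring_scope.

Definition softphi (R : realType) (n : nat) (xi : 'I_n -> R) (j : 'I_n)
  (z : 'rV[R]_n) : R :=
  xi j * expR (z ord0 j) / \sum_(k < n) xi k * expR (z ord0 k).

Definition pderiv (R : realType) (n : nat) (i : 'I_n)
  (f : 'rV[R]_n -> R) : 'rV[R]_n -> R :=
  fun z => derive f z (delta_mx 0 i : 'rV[R]_n).

Definition mpderiv (R : realType) (n : nat) (gamma : 'I_n -> nat)
  (f : 'rV[R]_n -> R) : 'rV[R]_n -> R :=
  foldr (fun i g => iter (gamma i) (pderiv i) g) f (enum 'I_n).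

Definition taylor_coef (R : realType) (n : nat) (f : 'rV[R]_n -> R)
  (gamma : 'I_n -> nat) : R :=
  mpderiv gamma f 0 / (\prod_(i < n) (gamma i)`!)%:R.

(* Main.v *)
Require Import Defs.
From HB Require Import structures.
From mathcomp Require Import all_boot all_order all_algebra.
From mathcomp Require Import all_classical all_reals all_analysis.
From mathcomp Require Import ring lra.
Import Order.TTheory GRing.Theory Num.Theory.
Local Open Scope ring_scope.

Section Words.
Variables (R : realType) (n : nat).

Fixpoint W (k : nat) (f : seq 'I_n -> R) : R :=
  if k is k'.+1 then \sum_(i < n) W k' (fun w => f (i :: w)) else f [::].

Lemma W_ext k f g : (forall w, f w = g w) -> W k f = W k g.
Proof. by move=> E; congr W; apply/funext. Qed.

Lemma W_le k f g : (forall w, size w = k -> f w <= g w) -> W k f <= W k g.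
Proof.
elim: k f g => [|k IH] f g H /=; first exact: H.
by apply: ler_sum => i _; apply: IH => w sw; apply: H; rewrite /= sw.
Qed.

Lemma W_sum k (F : 'I_n -> seq 'I_n -> R) :
  W k (fun w => \sum_(i < n) F i w) = \sum_(i < n) W k (F i).
Proof.
elim: k F => [//|k IH] F /=.
rewrite (eq_bigr _ (fun a _ => IH (fun i w => F i (a :: w)))).
by rewrite exchange_big.
Qed.

Lemma W_scale k c f : W k (fun w => c * f w) = c * W k f.
Proof.
elim: k f => [//|k IH] f /=.
by rewrite mulr_sumr; apply: eq_bigr => i _; rewrite IH.
Qed.

Lemma W_Sr k f : W k.+1 f = W k (fun w => \sum_(i < n) f (i :: w)).
Proof.
elim: k f => [//|k IH] f.
rewrite [LHS]/= (eq_bigr _ (fun a _ => IH (fun w => f (a :: w)))).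
rewrite -W_sum [RHS]/= -W_sum; apply: W_ext => w.
by rewrite exchange_big.
Qed.

Lemma W_ext_size k f g : (forall w, size w = k -> f w = g w) -> W k f = W k g.
Proof.
elim: k f g => [|k IH] f g H /=; first exact: H.
by apply: eq_bigr => i _; apply: IH => w sw; apply: H; rewrite /= sw.
Qed.

End Words.

Section Count.
Variables (R : realType) (n K : nat).
Local Notation W := (W R n).

Local Notation T := {ffun 'I_n -> 'I_K.+1}.
Definition typ (w : seq 'I_n) : T := [ffun m => inord (count_mem m w)].
Definition sumg (g : T) := (\sum_(i < n) (g i : nat))%N.
Definition factg (g : T) := (\prod_(i < n) (g i)`!)%N.
Definition incr (i : 'I_n) (g : T) : T := [ffun m => inord (g m + (m == i))].
Definition decr (i : 'I_n) (g : T) : T := [ffun m => inord (g m - (m == i))].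

Lemma inord_val m : (inord m : 'I_K.+1) = m :> nat \/ (inord m : 'I_K.+1) = 0 :> nat.
Proof.
case: (ltnP m K.+1) => h; first by left; rewrite inordK.
by right; rewrite /inord /insubd insubN // -ltnNge.
Qed.

Lemma inord_big m : (K < m)%N -> (inord m : 'I_K.+1) = 0 :> nat.
Proof. by move=> h; rewrite /inord /insubd insubN // -ltnNge. Qed.

Lemma incr_val i (b : T) m : (b i < K)%N -> (incr i b m : nat) = (b m + (m == i))%N.
Proof.
move=> h; rewrite ffunE inordK //.
case: eqP => [->|_]; first by rewrite addn1 ltnS.
by rewrite addn0 ltnS -ltnS ltn_ord.
Qed.

Lemma decr_incr i (b : T) : (b i < K)%N -> decr i (incr i b) = b.
Proof.
move=> h; apply/ffunP => m; apply: val_inj.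
rewrite ffunE /= incr_val // addnK inordK //.
Qed.

Lemma incr_decr i (g : T) : (0 < g i)%N -> incr i (decr i g) = g.
Proof.
move=> h; apply/ffunP => m; apply: val_inj.
have hm : (g m - (m == i) < K.+1)%N by apply: leq_ltn_trans (leq_subr _ _) (ltn_ord _).
rewrite ffunE /= ffunE (inordK hm).
case: eqP => [->|_]; last by rewrite !subn0 !addn0 inordK.
by rewrite subnK // inordK.
Qed.

Lemma sumg_incr i (b : T) : (b i < K)%N -> sumg (incr i b) = (sumg b).+1.
Proof.
move=> h; rewrite /sumg (eq_bigr _ (fun m _ => incr_val i b m h)) big_split /=.
suff -> : (\sum_(m < n) (m == i) = 1)%N by rewrite addn1.
by rewrite (bigD1 i) //= eqxx big1 // => m /negbTE ->.
Qed.

Lemma factg_incr i (b : T) : (b i < K)%N -> factg (incr i b) = ((b i).+1 * factg b)%N.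
Proof.
move=> h; rewrite /factg (bigD1 i) //= [in RHS](bigD1 i) //= incr_val // eqxx addn1.
rewrite factS -mulnA; congr (_ * (_ * _))%N.
by apply: eq_bigr => m /negbTE mi; rewrite incr_val // mi addn0.
Qed.

Lemma sumg_le (b : T) m : (b m <= sumg b)%N.
Proof. by rewrite /sumg (bigD1 m) //= leq_addr. Qed.

Lemma typ_cons i w : (size w < K)%N -> typ (i :: w) = incr i (typ w).
Proof.
move=> h; apply/ffunP => m.
have hc : (count_mem m w < K.+1)%N.
  by rewrite ltnS (leq_trans (count_size _ _)) // ltnW.
by rewrite !ffunE /= (inordK hc) eq_sym addnC.
Qed.


Lemma factg_gt0 g : (0 < factg g)%N.
Proof.
rewrite /factg; apply: (big_ind (fun m => 0 < m)%N) => //.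
  by move=> x y x0 y0; rewrite muln_gt0 x0 y0.
by move=> m _; apply: fact_gt0.
Qed.

Lemma factg_neq0 g : (factg g)%:R != 0 :> R.
Proof. by rewrite pnatr_eq0 -lt0n factg_gt0. Qed.

Lemma reindex_i i (k : nat) (G : T -> R) : (k < K)%N ->
  \sum_(b : T | sumg b == k) G (incr i b) =
  \sum_(g : T | (sumg g == k.+1) && (0 < g i)%N) G g.
Proof.
move=> hk.
rewrite [RHS](reindex_onto (incr i) (decr i)) /=; last first.
  by move=> g /andP [_]; apply: incr_decr.
apply: eq_bigl => b.
case: (ltnP (b i) K) => hb.
  by rewrite sumg_incr // decr_incr // eqxx andbT eqSS incr_val // eqxx addn1 andbT.
have -> : (sumg b == k) = false.
  apply/negbTE; rewrite neq_ltn (leq_trans hk (leq_trans hb (sumg_le b i))).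
  by rewrite orbT.
by rewrite ffunE eqxx inord_big ?andbF // addn1 ltnS.
Qed.

Lemma W_typ k (X : T -> R) : (k <= K)%N ->
  W k (fun w => X (typ w)) =
  \sum_(g : T | sumg g == k) X g * (k`!)%:R / (factg g)%:R.
Proof.
elim: k X => [|k IH] X hk.
  rewrite /= (big_pred1 (typ [::])); last first.
    move=> g; rewrite /= sum_nat_eq0; apply/forallP/eqP => [H|->] /=.
      apply/ffunP => m; apply: val_inj; rewrite ffunE /= inordK //.
      by apply/eqP; apply: H.
    by move=> m; rewrite ffunE inordK.
  have -> : factg (typ [::]) = 1%N.
    by rewrite /factg big1 // => m _; rewrite ffunE inordK.
  by rewrite divr1 mulr1.
have hk' : (k < K)%N by [].
rewrite /=.
have E0 : forall i, W k (fun w => X (typ (i :: w))) = W k (fun w => X (incr i (typ w))).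
  by move=> i; apply: W_ext_size => w sw; rewrite typ_cons // sw.
rewrite (eq_bigr _ (fun i _ => E0 i)).
rewrite (eq_bigr _ (fun i _ => IH (fun g => X (incr i g)) (ltnW hk'))).
pose G i g := X g * (k`!)%:R * (g i)%:R / (factg g)%:R.
have E1 : forall i, \sum_(b : T | sumg b == k) X (incr i b) * (k`!)%:R / (factg b)%:R
    = \sum_(b : T | sumg b == k) G i (incr i b).
  move=> i; apply: eq_bigr => b /eqP sb.
  have hb : (b i < K)%N by apply: leq_ltn_trans hk'; rewrite -sb sumg_le.
  rewrite /G factg_incr // incr_val // eqxx addn1 natrM.
  have := factg_neq0 b; have : ((b i).+1)%:R != 0 :> R by rewrite pnatr_eq0.
  move=> h1 h2; field.
  by rewrite h2 addrC natr1 h1.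
rewrite (eq_bigr _ (fun i _ => E1 i)).
rewrite (eq_bigr _ (fun i _ => reindex_i i k (G i) hk')).
have E2 : forall i, \sum_(g : T | (sumg g == k.+1) && (0 < g i)%N) G i g =
                    \sum_(g : T | sumg g == k.+1) G i g.
  move=> i; rewrite [RHS](bigID (fun g : T => (0 < g i)%N)) /=.
  rewrite [X in _ = _ + X]big1 ?addr0 // => g /andP [_].
  by rewrite -eqn0Ngt /G => /eqP ->; rewrite mulr0 mul0r.
rewrite (eq_bigr _ (fun i _ => E2 i)) exchange_big /=.
apply: eq_bigr => g /eqP sg.
rewrite /G -mulr_suml -mulr_sumr -natr_sum.
rewrite -/(sumg g) sg factS natrM; ring.
Qed.
End Count.

Section Analysis.
Variables (R : realType) (n : nat) (xi : 'I_n -> R).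
Hypothesis xi_ge0 : forall i, 0 <= xi i.
Hypothesis xi_sum : \sum_(i < n) xi i = 1.

Local Notation V := 'rV[R]_n.

Lemma coord_derive (g : R -> R) (m : 'I_n) (z v : V) :
  derive (fun y : V => g (y ord0 m)) z v = derive g (z ord0 m) (v ord0 m) /\
  (derivable (fun y : V => g (y ord0 m)) z v <-> derivable g (z ord0 m) (v ord0 m)).
Proof.
have E : (fun h : R => h^-1 *: (((fun y : V => g (y ord0 m)) \o shift z) (h *: v)
            - g (z ord0 m))) =
         (fun h : R => h^-1 *: ((g \o shift (z ord0 m)) (h *: (v ord0 m)) - g (z ord0 m))).
  by apply/funext => h /=; rewrite !mxE.
by rewrite /derive /derivable E.
Qed.

Definition Ef (m : 'I_n) : V -> R := fun y => expR (y ord0 m).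

Lemma Ef_der (m i : 'I_n) (z : V) :
  is_derive z (delta_mx 0 i : V) (Ef m) ((m == i)%:R * Ef m z).
Proof.
have [D1 D2] := coord_derive expR m z (delta_mx 0 i).
have hv : (delta_mx 0 i : V) ord0 m = (m == i)%:R by rewrite mxE eqxx /= eq_sym.
rewrite hv in D1 D2.
apply: DeriveDef.
  rewrite /Ef; apply/D2; case: eqP => _; first exact: derivable_expR.
  exact: derivable0.
rewrite /Ef D1; case: eqP => _.
  by rewrite mul1r; apply: derive_val.
by rewrite mul0r derive0.
Qed.

Definition Den (z : V) := \sum_(k < n) xi k * Ef k z.

Lemma Den_gt0 z : 0 < Den z.
Proof.
rewrite /Den lt_def sumr_ge0 ?andbT; last first.
  by move=> k _; rewrite mulr_ge0 // /Ef expR_ge0.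
have hge : forall i : 'I_n, true -> 0 <= xi i * Ef i z.
  by move=> k _; rewrite mulr_ge0 // /Ef expR_ge0.
apply/negP => /eqP/(psumr_eq0P hge) H.
have : \sum_(i < n) xi i = 0.
  apply: big1 => i _; have /eqP := H i isT.
  by rewrite mulf_eq0 => /orP [/eqP //|]; rewrite /Ef gt_eqF ?expR_gt0.
by rewrite xi_sum => /eqP; rewrite oner_eq0.
Qed.


Lemma Den_der i z : is_derive z (delta_mx 0 i : V) Den (xi i * Ef i z).
Proof.
have -> : Den = \sum_(k < n) (fun y => xi k * Ef k y).
  by rewrite fct_sumE; apply/funext => y.
have -> : xi i * Ef i z = \sum_(k < n) (xi k * ((k == i)%:R * Ef k z)).
  rewrite (bigD1 i) //= eqxx mul1r big1 ?addr0 // => k /negbTE ->.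
  by rewrite mul0r mulr0.
apply: is_derive_sum => k.
have := is_deriveZ (xi k) (Ef_der k i z).
by [].
Qed.

Lemma Deninv_der i z : is_derive z (delta_mx 0 i : V) (fun y => (Den y)^-1)
   (- (Den z) ^-2 *: (xi i * Ef i z)).
Proof.
have D := Den_der i z.
have Dz : Den z != 0 by rewrite gt_eqF // Den_gt0.
apply: DeriveDef; first exact: derivableV.
by rewrite deriveV // derive_val.
Qed.

Lemma softphi_der m i z :
  is_derive z (delta_mx 0 i : V) (softphi xi m)
    (softphi xi m z * ((m == i)%:R - softphi xi i z)).
Proof.
have -> : softphi xi m = (fun y => xi m * Ef m y) * (fun y => (Den y)^-1).
  by apply/funext => y.
have H1 : is_derive z (delta_mx 0 i : V) (fun y => xi m * Ef m y)
             (xi m * ((m == i)%:R * Ef m z)).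
  exact: (is_deriveZ (xi m) (Ef_der m i z)).
have H := is_deriveM H1 (Deninv_der i z).
apply: (is_derive_eq H).
have Dz : Den z != 0 by rewrite gt_eqF // Den_gt0.
rewrite /softphi /=. rewrite -/(Den z) /Ef.
rewrite /GRing.scale /=.
rewrite [X in _ = X * _](_ : _ = xi m * expR (z ord0 m) * (Den z)^-1) //.
field.
by [].
Qed.

Definition mon (s : seq 'I_n) (z : V) : R := \prod_(m <- s) softphi xi m z.
Definition evalP (P : seq (R * seq 'I_n)) (z : V) : R :=
  \sum_(t <- P) t.1 * mon t.2 z.
Definition Dmon (i : 'I_n) (t : R * seq 'I_n) : seq (R * seq 'I_n) :=
  [:: (t.1 * (count_mem i t.2)%:R, t.2); (- (t.1 * (size t.2)%:R), i :: t.2)].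
Fixpoint DP (i : 'I_n) (P : seq (R * seq 'I_n)) : seq (R * seq 'I_n) :=
  match P with [::] => [::] | t :: P' => Dmon i t ++ DP i P' end.

Lemma mon_der i s z : is_derive z (delta_mx 0 i : V) (mon s)
  (mon s z * ((count_mem i s)%:R - (size s)%:R * softphi xi i z)).
Proof.
elim: s => [|m s IH].
  have -> : mon [::] = cst 1 by apply/funext => y; rewrite /mon big_nil.
  apply: (is_derive_eq (is_derive_cst _ _ _)).
  by rewrite /= !mul0r subr0 mulr0.
have -> : mon (m :: s) = softphi xi m * mon s.
  by apply/funext => y; rewrite /mon big_cons.
apply: (is_derive_eq (is_deriveM (softphi_der m i z) IH)).
rewrite /GRing.scale /=.
rewrite [X in _ = X * _](_ : _ = softphi xi m z * mon s z) //.
rewrite natrD -addn1 natrD.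
case: eqP => [->|_]; rewrite /=; ring.
Qed.

Lemma evalP_cat P Q z : evalP (P ++ Q) z = evalP P z + evalP Q z.
Proof. by rewrite /evalP big_cat. Qed.

Lemma evalP_der i P z : is_derive z (delta_mx 0 i : V) (evalP P) (evalP (DP i P) z).
Proof.
elim: P => [|t P IH].
  have -> : evalP [::] = cst 0 by apply/funext => y; rewrite /evalP big_nil.
  by apply: (is_derive_eq (is_derive_cst _ _ _)).
have -> : evalP (t :: P) = (fun y => t.1 * mon t.2 y) + evalP P.
  by apply/funext => y; rewrite /evalP big_cons.
apply: (is_derive_eq (is_deriveD (is_deriveZ t.1 (mon_der i t.2 z)) IH)).
change (DP i (t :: P)) with (Dmon i t ++ DP i P).
rewrite evalP_cat; congr (_ + _).
rewrite /evalP !big_cons big_nil /= /GRing.scale /=.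
rewrite /mon big_cons /= -/(mon t.2 z); ring.
Qed.

Lemma pderiv_evalP i P : pderiv i (evalP P) = evalP (DP i P).
Proof.
apply/funext => z; rewrite /pderiv.
have H := evalP_der i P z.
by rewrite derive_val.
Qed.

Lemma sum_DP (G : R * seq 'I_n -> R) i P :
  \sum_(t <- DP i P) G t = \sum_(t <- P)
     (G (t.1 * (count_mem i t.2)%:R, t.2) + G (- (t.1 * (size t.2)%:R), i :: t.2)).
Proof.
elim: P => [|t P IH]; first by rewrite !big_nil.
change (DP i (t::P)) with (Dmon i t ++ DP i P).
by rewrite [in RHS]big_cons -IH big_cat /= !big_cons big_nil addr0.
Qed.

Lemma evalP_D i P z : evalP (DP i P) z = \sum_(t <- P)
  t.1 * (mon t.2 z * ((count_mem i t.2)%:R - (size t.2)%:R * softphi xi i z)).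
Proof.
rewrite /evalP sum_DP; apply: eq_bigr => t _ /=.
rewrite /mon big_cons /= -/(mon t.2 z); ring.
Qed.

Lemma evalP_comm i l P z : evalP (DP i (DP l P)) z = evalP (DP l (DP i P)) z.
Proof.
rewrite !evalP_D.
rewrite !(sum_DP (fun t => t.1 * (mon t.2 z * ((count_mem _ t.2)%:R
   - (size t.2)%:R * softphi xi _ z)))).
apply: eq_bigr => -[c s] _ /=.
rewrite {2 4}/mon !big_cons -/(mon s z).
case: (eqVneq l i) => [->|nli].

  move: (mon s z) (softphi xi i z) (count_mem i s) (size s) => A p ci d.
  rewrite !natrD -addn1 natrD; ring.
move: (mon s z) (softphi xi i z) (softphi xi l z) (count_mem i s) (count_mem l s) (size s) => A p q ci cl d.
rewrite !natrD -addn1 natrD /=; ring.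
Qed.

Definition Dw (w : seq 'I_n) P := foldr (fun i Q => DP i Q) P w.

Lemma foldr_pderiv w P :
  foldr (fun i g => pderiv i g) (evalP P) w = evalP (Dw w P).
Proof. by elim: w => [//|i w IH] /=; rewrite IH pderiv_evalP. Qed.

Lemma evalP_DP_congr i P Q : evalP P = evalP Q -> evalP (DP i P) = evalP (DP i Q).
Proof. by move=> E; rewrite -!pderiv_evalP E. Qed.

Lemma Dw_front w1 i w2 P :
  evalP (Dw (w1 ++ i :: w2) P) = evalP (Dw (i :: w1 ++ w2) P).
Proof.
elim: w1 => [//|a w1 IH] /=.
rewrite (evalP_DP_congr a _ _ IH) /=.
by apply/funext => z; rewrite evalP_comm.
Qed.

Lemma Dw_perm w w' P : perm_eq w w' -> evalP (Dw w P) = evalP (Dw w' P).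
Proof.
elim: w w' => [|i w IH] w'.
  by move/perm_size/esym/size0nil ->.
move=> pe.
have imw : i \in w' by rewrite -(perm_mem pe) mem_head.
move: pe; case/splitPr: imw => w1 w2 pe.
rewrite Dw_front /=.
apply: evalP_DP_congr; apply: IH.
rewrite -(perm_cons i); apply: (perm_trans pe).
by rewrite (perm_catCA w1 [:: i] w2).
Qed.

Definition monx (s : seq 'I_n) : R := \prod_(m <- s) xi m.
Definition NP (P : seq (R * seq 'I_n)) : R := \sum_(t <- P) `|t.1| * monx t.2.
Definition sizes_le (d : nat) (P : seq (R * seq 'I_n)) := all (fun t => size t.2 <= d)%N P.

Lemma monx_ge0 s : 0 <= monx s.
Proof. by apply: prodr_ge0 => m _. Qed.

Lemma NP_ge0 P : 0 <= NP P.
Proof. by apply: sumr_ge0 => t _; rewrite mulr_ge0 // monx_ge0. Qed.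

Lemma Den0 : Den 0 = 1.
Proof. by rewrite /Den -xi_sum; apply: eq_bigr => k _; rewrite /Ef mxE expR0 mulr1. Qed.

Lemma softphi0 m : softphi xi m 0 = xi m.
Proof. by rewrite /softphi -/(Ef m 0) -/(Den 0) Den0 divr1 /Ef mxE expR0 mulr1. Qed.

Lemma mon0 s : mon s 0 = monx s.
Proof. by rewrite /mon /monx; apply: eq_bigr => m _; rewrite softphi0. Qed.

Lemma evalP0_le P : `|evalP P 0| <= NP P.
Proof.
rewrite /evalP /NP; apply: le_trans (ler_norm_sum _ _ _) _.
by apply: ler_sum => t _; rewrite normrM mon0 (ger0_norm (monx_ge0 _)).
Qed.

Lemma sizes_DP d i P : sizes_le d P -> sizes_le d.+1 (DP i P).
Proof.
elim: P => [//|t P IH] /andP [ht hP].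
rewrite /sizes_le; change (DP i (t::P)) with (Dmon i t ++ DP i P).
rewrite all_cat -/(sizes_le d.+1 (DP i P)) IH // andbT /= ltnS ht.
by rewrite leqW.
Qed.

Lemma sizes_Dw d w P : sizes_le d P -> sizes_le (d + size w) (Dw w P).
Proof.
elim: w => [|i w IH] hP /=; first by rewrite addn0.
by rewrite addnS; apply: sizes_DP; apply: IH.
Qed.

Lemma sum_count (s : seq 'I_n) : (\sum_(i < n) count_mem i s)%N = size s.
Proof.
elim: s => [|a s IH] /=; first by rewrite big1.
rewrite big_split /= IH.
rewrite (bigD1 a) //= eqxx big1 // => i /negbTE.
by rewrite eq_sym => ->.
Qed.

Lemma NP_DP_sum d P : sizes_le d P ->
  \sum_(i < n) NP (DP i P) <= 2 * d%:R * NP P.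
Proof.
move=> hP.
have E : forall i, NP (DP i P) =
   \sum_(t <- P) `|t.1| * monx t.2 * ((count_mem i t.2)%:R + (size t.2)%:R * xi i).
  move=> i; rewrite /NP (sum_DP (fun t => `|t.1| * monx t.2)).
  apply: eq_bigr => -[c s] _ /=.
  rewrite normrN !normrM (ger0_norm (ler0n _ _)) (ger0_norm (ler0n _ _)).
  have -> : monx (i :: s) = xi i * monx s by rewrite /monx big_cons.
  ring.
rewrite (eq_bigr _ (fun i _ => E i)) exchange_big /= /NP mulr_sumr.
rewrite !big_seq; apply: ler_sum => t tP.
rewrite -mulr_sumr big_split /= -mulr_sumr xi_sum mulr1 -natr_sum sum_count.
rewrite [leRHS]mulrC; apply: ler_wpM2l; first by rewrite mulr_ge0 // monx_ge0.
move/allP: hP => /(_ t tP) hs.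
by rewrite mulr_natl mulr2n -!natrD ler_nat leq_add.
Qed.

Local Notation W := (W R n).

Lemma W_bound k P : sizes_le 1 P ->
  W k (fun w => NP (Dw w P)) <= (2 ^ k * k`!)%:R * NP P.
Proof.
move=> hP; elim: k => [|k IH]; first by rewrite /= mul1r.
rewrite W_Sr.
apply: (@le_trans _ _ (W k (fun w => (2 * (1 + k)%:R) * NP (Dw w P)))).
  apply: W_le => w sw /=.
  by rewrite -sw; apply: NP_DP_sum; apply: sizes_Dw.
rewrite W_scale.
apply: le_trans (ler_wpM2l _ IH) _; first by rewrite mulr_ge0.
rewrite mulrA ler_wpM2r ?NP_ge0 //.
rewrite -[2 : R]/(2%:R) -!natrM ler_nat factS expnS.
by apply: eq_leq; ring.
Qed.

Definition word (g : 'I_n -> nat) : seq 'I_n := flatten [seq nseq (g i) i | i <- enum 'I_n].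

Lemma mp_foldr (g : 'I_n -> nat) (f : V -> R) (s : seq 'I_n) :
  foldr (fun i h => iter (g i) (pderiv i) h) f s =
  foldr (fun i h => pderiv i h) f (flatten [seq nseq (g i) i | i <- s]).
Proof.
elim: s => [//|a s IH] /=; rewrite foldr_cat -IH.
by elim: (g a) => [//|c IHc] /=; rewrite IHc.
Qed.

Lemma count_word (g : 'I_n -> nat) m : count_mem m (word g) = g m.
Proof.
rewrite /word count_flatten -map_comp sumnE big_map big_enum /=.
rewrite (bigD1 m) //= count_nseq /= eqxx mul1n big1 ?addn0 // => i /negbTE.
by rewrite count_nseq /= eq_sym => ->.
Qed.

Lemma main_bound j k : (1 <= k)%N ->
  \sum_(gamma : {ffun 'I_n -> 'I_k.+1} | (\sum_(i < n) (gamma i : nat))%N == k)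
     `| taylor_coef (softphi xi j) (fun i => (gamma i : nat)) |
  <= xi j * expR (k%:R + 1).
Proof.
move=> hk.
pose Pj : seq (R * seq 'I_n) := [:: (1, [:: j])].
have ePj : evalP Pj = softphi xi j.
  by apply/funext => z; rewrite /evalP /mon !big_cons !big_nil /= mul1r mulr1 addr0.
have mpd : forall g : 'I_n -> nat, mpderiv g (softphi xi j) = evalP (Dw (word g) Pj).
  by move=> g; rewrite /mpderiv mp_foldr -ePj foldr_pderiv.
pose X (g : {ffun 'I_n -> 'I_k.+1}) := `|evalP (Dw (word (fun i => (g i : nat))) Pj) 0|.
have LHS_E : \sum_(gamma : {ffun 'I_n -> 'I_k.+1} | (\sum_(i < n) (gamma i : nat))%N == k)
     `| taylor_coef (softphi xi j) (fun i => (gamma i : nat)) | =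
   \sum_(g : {ffun 'I_n -> 'I_k.+1} | sumg n k g == k) X g / (factg n k g)%:R.
  apply: eq_bigr => g _.
  rewrite /taylor_coef mpd normrM normfV /X (ger0_norm (ler0n _ _)) //.
have WT := W_typ R n k k X (leqnn k).
have Xtyp : forall w : seq 'I_n, size w = k ->
    X (typ n k w) = `|evalP (Dw w Pj) 0|.
  move=> w sw; rewrite /X (Dw_perm _ w Pj) //.
  apply/allP => x _ /=; rewrite count_word ffunE inordK //.
  by rewrite ltnS -sw count_size.
have Wle : W k (fun w => X (typ n k w)) <= (2 ^ k * k`!)%:R * xi j.
  apply: (@le_trans _ _ (W k (fun w => NP (Dw w Pj)))).
    by apply: W_le => w sw; rewrite Xtyp // evalP0_le.
  have -> : xi j = NP Pj.
    by rewrite /NP /monx !big_cons !big_nil /= normr1 mul1r mulr1 addr0.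
  by apply: W_bound.
rewrite LHS_E.
have kf0 : 0 < (k`!)%:R :> R by rewrite ltr0n fact_gt0.
have H1 : (k`!)%:R * \sum_(g : {ffun 'I_n -> 'I_k.+1} | sumg n k g == k) X g / (factg n k g)%:R
    <= (k`!)%:R * (2 ^ k * xi j).
  rewrite mulr_sumr (_ : \sum_(i | _) _ = W k (fun w => X (typ n k w))); last first.
    by rewrite WT; apply: eq_bigr => g _; rewrite mulrCA mulrA.
  by apply: le_trans Wle _; rewrite natrM natrX mulrA [_ * k`!%:R]mulrC.
have H2 : \sum_(g : {ffun 'I_n -> 'I_k.+1} | sumg n k g == k) X g / (factg n k g)%:R
    <= 2 ^ k * xi j by rewrite -(ler_pM2l kf0).
apply: le_trans H2 _.
rewrite mulrC ler_wpM2l //.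
have e2 : 2 <= expR (1 : R) by have := expR_ge1Dx (1 : R); rewrite -[1 + 1]/2.
have -> : k%:R + 1 = (k.+1)%:R * (1 : R) by rewrite mulr1 -natr1.
rewrite expRM_natl.
apply: le_trans (_ : 2 ^+ k.+1 <= _).
  by rewrite exprS ler_peMl ?exprn_ge0 // ler1n.
by rewrite lerXn2r // ?nnegrE ?expR_ge0.
Qed.
End Analysis.

(* Multi-indices gamma with |gamma| = k have all entries <= k, so they are
   enumerated as gamma : {ffun 'I_n -> 'I_k.+1} with \sum_i gamma i = k. *)
Theorem lemmaB5 (R : realType) (n : nat) (xi : 'I_n -> R)
  (xi_ge0 : forall i, 0 <= xi i) (xi_sum : \sum_(i < n) xi i = 1)
  (j : 'I_n) (k : nat) (hk : (1 <= k)%N) :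
  \sum_(gamma : {ffun 'I_n -> 'I_k.+1} | (\sum_(i < n) (gamma i : nat))%N == k)
     `| taylor_coef (softphi xi j) (fun i => (gamma i : nat)) |
  <= xi j * expR (k%:R + 1).
Proof. exact: (@main_bound R n xi xi_ge0 xi_sum j k hk). Qed.
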